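(* Let $f,g\in C(\mathbb{R}_0^+\times\mathbb{R}_0^+,\mathbb{R}_0^+)$ be such that $t\mapsto f(t,s)$ and $t\mapsto g(t,s)$ are nondecreasing for every fixed $s$. Let $\phi\in C(\mathbb{R}_0^+,\mathbb{R}_0^+)$ be strictly increasing with $\lim_{x\to\infty}\phi(x)=\infty$. Let $c\in C(\mathbb{R}_0^+,\mathbb{R}^+)$ be nondecreasing. Let $\eta,w\in C(\mathbb{R}_0^+,\mathbb{R}_0^+)$ be nondecreasing with $\eta(x)>0$ and $w(x)>0$ for all $x>0$. Let $x_0$, $G$, $\Psi$ be as in the context (in particular $\int_{x_0}^\infty \frac{ds}{\eta(\phi^{-1}(s))}=\infty$). Let $\alpha\in C^1(\mathbb{R}_0^+,\mathbb{R}_0^+)$ be nondecreasing with $\alpha(t)\le t$ for all $t\ge 0$. Suppose $u\in C(\mathbb{R}_0^+,\mathbb{R}_0^+)$ satisfies $$\phi(u(t))\le c(t)+\int_0^{\alpha(t)}\big[f(t,s)\,\eta(u(s))\,w(u(s))+g(t,s)\,\eta(u(s))\big]\,ds\qquad\text{for all } t\ge 0.$$ Define $p(t)=G(c(t))+\int_0^{\alpha(t)}g(t,s)\,ds$. Then there exists $\tau>0$ such that for all $t\in[0,\tau]$, $$\Psi(p(t))+\int_0^{\alpha(t)}f(t,s)\,ds\in \Psi\big((0,\infty)\big)=\mathrm{Dom}(\Psi^{-1})$$ and $$u(t)\le \phi^{-1}\Big\{G^{-1}\Big(\Psi^{-1}\Big[\Psi(p(t))+\int_0^{\alpha(t)}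f(t,s)\,ds\Big]\Big)\Big\}.$$
   Context: $\mathbb{R}_0^+=[0,\infty)$, $\mathbb{R}^+=(0,\infty)$. $\phi^{-1}$ denotes the inverse of $\phi$, defined on $[\phi(0),\infty)$. The constant $x_0$ is a real number with $\phi(0)\le x_0<c(0)$ such that $\int_{x_0}^x\frac{ds}{\eta(\phi^{-1}(s))}<\infty$ for every $x\ge x_0$ and $\int_{x_0}^\infty\frac{ds}{\eta(\phi^{-1}(s))}=\infty$ (in the paper: $x_0>0$ may be required when $\int_0^x\frac{ds}{\eta(\phi^{-1}(s))}=\infty$, and $x_0\ge0$ is allowed when this integral is finite). Define $G:[x_0,\infty)\to[0,\infty)$ by $G(x)=\int_{x_0}^x\frac{ds}{\eta(\phi^{-1}(s))}$; it is a strictly increasing bijection with inverse $G^{-1}$. Fix $x_1>0$ and define, for $x>0$, $\Psi(x)=\int_{x_1}^x\frac{ds}{w(\phi^{-1}(G^{-1}(s)))}$; $\Psi$ is strictly increasing on $(0,\infty)$, $\Psi^{-1}$ is its inverse and $\mathrm{Dom}(\Psi^{-1})=\Psi((0,\infty))$. *)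

(* Defs.v *)
From Stdlib Require Import Reals Lra Classical ClassicalEpsilon.
Open Scope R_scope.

(* Oriented Riemann integral of f from a to b (value 0 if not Riemann integrable). *)
Definition Rint (f : R -> R) (a b : R) : R :=
  epsilon (inhabits 0)
    (fun v => (exists pr : Riemann_integrable f a b, RiemannInt pr = v)
              \/ ((Riemann_integrable f a b -> False) /\ v = 0)).

Definition lower_improper_limit (f : R -> R) (a b l : R) : Prop :=
  forall eps, 0 < eps -> exists d, 0 < d /\
    forall c, a < c < a + d -> c <= b -> Rabs (Rint f c b - l) < eps.

(* int_a^b f, improper at a allowed; 0 if a >= b or no limit exists. *)
Definition ImpInt (f : R -> R) (a b : R) : R :=
  epsilon (inhabits 0)
    (fun l => (a < b /\ lower_improper_limit f a b l)
              \/ (~ (a < b /\ exists l', lower_improper_limit f a b l') /\ l = 0)).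

(* Inverse of f restricted to the domain P (value 0 outside the range). *)
Definition inv_on (P : R -> Prop) (f : R -> R) (y : R) : R :=
  epsilon (inhabits 0)
    (fun x => (P x /\ f x = y) \/ (~ (exists x', P x' /\ f x' = y) /\ x = 0)).

Definition cont_nonneg (h : R -> R) : Prop :=
  forall x, 0 <= x -> forall eps, 0 < eps -> exists d, 0 < d /\
    forall y, 0 <= y -> Rabs (y - x) < d -> Rabs (h y - h x) < eps.

Definition cont2_nonneg (h : R -> R -> R) : Prop :=
  forall t s, 0 <= t -> 0 <= s -> forall eps, 0 < eps -> exists d, 0 < d /\
    forall t' s', 0 <= t' -> 0 <= s' -> Rabs (t' - t) < d -> Rabs (s' - s) < d ->
      Rabs (h t' s' - h t s) < eps.

Definition nondecr_nonneg (h : R -> R) : Prop :=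
  forall x y, 0 <= x -> x <= y -> h x <= h y.

Definition strict_incr_nonneg (h : R -> R) : Prop :=
  forall x y, 0 <= x -> x < y -> h x < h y.

Definition C1_nonneg (h : R -> R) : Prop :=
  exists h' : R -> R, cont_nonneg h' /\
    forall x, 0 <= x -> forall eps, 0 < eps -> exists d, 0 < d /\
      forall y, 0 <= y -> y <> x -> Rabs (y - x) < d ->
        Rabs ((h y - h x) / (y - x) - h' x) < eps.

Definition phi_inv (phi : R -> R) : R -> R := inv_on (fun x => 0 <= x) phi.

Definition Gfun (eta phi : R -> R) (x0 x : R) : R :=
  ImpInt (fun s => / eta (phi_inv phi s)) x0 x.

Definition G_inv (eta phi : R -> R) (x0 : R) : R -> R :=
  inv_on (fun x => x0 <= x) (Gfun eta phi x0).

Definition Psi (eta w phi : R -> R) (x0 x1 x : R) : R :=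
  Rint (fun s => / w (phi_inv phi (G_inv eta phi x0 s))) x1 x.

Definition Psi_inv (eta w phi : R -> R) (x0 x1 : R) : R -> R :=
  inv_on (fun x => 0 < x) (Psi eta w phi x0 x1).

(* Main.v *)
Require Import Defs.
From Stdlib Require Import Reals Lra Classical ClassicalEpsilon Ranalysis5.
Open Scope R_scope.


Lemma cpt_intro (h : R -> R) x :
  (forall eps, 0 < eps -> exists d, 0 < d /\ forall y, Rabs (y - x) < d -> Rabs (h y - h x) < eps) ->
  continuity_pt h x.
Proof.
  intros H eps Heps. destruct (H eps Heps) as [d [Hd Hy]].
  exists d; split; auto. intros y [_ Hy']. apply Hy. exact Hy'.
Qed.

Lemma cpt_elim (h : R -> R) x : continuity_pt h x ->
  forall eps, 0 < eps -> exists d, 0 < d /\ forall y, Rabs (y - x) < d -> Rabs (h y - h x) < eps.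
Proof.
  intros H eps Heps. destruct (H eps Heps) as [d [Hd Hy]].
  exists d; split; auto. intros y Hy'.
  destruct (Req_dec y x) as [->|Hne].
  - rewrite Rminus_diag, Rabs_R0; auto.
  - apply (Hy y). split; [split; [exact I| auto] | exact Hy'].
Qed.

Lemma cn_pos h x : cont_nonneg h -> 0 < x -> continuity_pt h x.
Proof.
  intros H Hx. apply cpt_intro. intros eps Heps.
  destruct (H x (Rlt_le _ _ Hx) eps Heps) as [d [Hd Hy]].
  exists (Rmin d x). split. apply Rmin_glb_lt; auto.
  intros y Hy'. apply Hy. 2: { apply Rlt_le_trans with (Rmin d x); auto; apply Rmin_l. }
  assert (Rabs (y - x) < x) by (apply Rlt_le_trans with (Rmin d x); auto; apply Rmin_r).
  apply Rabs_def2 in H0. lra.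
Qed.

Lemma cn_clamp h x : cont_nonneg h -> continuity_pt (fun y => h (Rmax 0 y)) x.
Proof.
  intros H. apply cpt_intro. intros eps Heps.
  destruct (H (Rmax 0 x) (Rmax_l _ _) eps Heps) as [d [Hd Hy]].
  exists d. split; auto. intros y Hy'. apply Hy. apply Rmax_l.
  apply Rle_lt_trans with (Rabs (y - x)); auto.
  unfold Rmax, Rabs; destruct (Rle_dec 0 y); destruct (Rle_dec 0 x);
  repeat destruct Rcase_abs; lra.
Qed.

Lemma cn_comp h k x : cont_nonneg h -> continuity_pt k x -> (forall y, 0 <= k y) ->
  continuity_pt (fun y => h (k y)) x.
Proof.
  intros Hh Hk Hpos. apply cpt_intro. intros eps Heps.
  destruct (Hh (k x) (Hpos x) eps Heps) as [d [Hd Hy]].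
  destruct (cpt_elim k x Hk d Hd) as [d2 [Hd2 Hy2]].
  exists d2; split; auto.
Qed.

Lemma Rabs_le_inv x a : Rabs x <= a -> -a <= x <= a.
Proof. unfold Rabs; destruct Rcase_abs; lra. Qed.
Lemma Rabs_inv_lt x a : Rabs x < a -> -a < x < a.
Proof. unfold Rabs; destruct Rcase_abs; lra. Qed.
Lemma Rabs_intro x a : -a < x < a -> Rabs x < a.
Proof. unfold Rabs; destruct Rcase_abs; lra. Qed.
Lemma Rabs_intro_le x a : -a <= x <= a -> Rabs x <= a.
Proof. unfold Rabs; destruct Rcase_abs; lra. Qed.

Lemma Rint_eq f a b (pr : Riemann_integrable f a b) : Rint f a b = RiemannInt pr.
Proof.
  unfold Rint.
  destruct (epsilon_spec (inhabits 0)
    (fun v => (exists pr : Riemann_integrable f a b, RiemannInt pr = v)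
              \/ ((Riemann_integrable f a b -> False) /\ v = 0))) as [[pr' E]|[F _]].
  - exists (RiemannInt pr). left. exists pr. reflexivity.
  - rewrite <- E. apply RiemannInt_P5.
  - exfalso; apply F; exact pr.
Qed.

Lemma Rint_chasles f a b c : Riemann_integrable f a b -> Riemann_integrable f b c ->
  Rint f a b + Rint f b c = Rint f a c.
Proof.
  intros p1 p2. rewrite (Rint_eq _ _ _ p1), (Rint_eq _ _ _ p2),
   (Rint_eq _ _ _ (RiemannInt_P24 p1 p2)). apply RiemannInt_P26.
Qed.

Lemma Rint_bound f a b l u : Riemann_integrable f a b -> a <= b ->
  (forall x, a <= x <= b -> l <= f x <= u) -> l * (b - a) <= Rint f a b <= u * (b - a).
Proof.
  intros p Hab H. rewrite (Rint_eq _ _ _ p). apply RiemannInt_const_bound; auto.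
  intros; apply H; lra.
Qed.

Lemma Rint_le f g a b : Riemann_integrable f a b -> Riemann_integrable g a b -> a <= b ->
  (forall x, a <= x <= b -> f x <= g x) -> Rint f a b <= Rint g a b.
Proof.
  intros p1 p2 Hab H. rewrite (Rint_eq _ _ _ p1), (Rint_eq _ _ _ p2).
  apply RiemannInt_P19; auto. intros; apply H; lra.
Qed.

Lemma Rint_aa f a : Rint f a a = 0.
Proof. rewrite (Rint_eq _ _ _ (RiemannInt_P7 f a)). apply RiemannInt_P9. Qed.

Lemma Rint_const c a b : Rint (fun _ => c) a b = c * (b - a).
Proof. exact (eq_trans (Rint_eq (fct_cte c) a b (RiemannInt_P14 a b c)) (RiemannInt_P15 _)). Qed.

Lemma Rint_nonneg f a b : Riemann_integrable f a b -> a <= b ->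
  (forall x, a <= x <= b -> 0 <= f x) -> 0 <= Rint f a b.
Proof.
  intros p Hab H. pose proof (Rint_le (fun _ => 0) f a b (RiemannInt_P14 a b 0) p Hab H).
  rewrite Rint_const in H0. lra.
Qed.

Lemma Rint_abs_bound f a b M : Riemann_integrable f a b -> 
  (forall x, Rmin a b <= x <= Rmax a b -> Rabs (f x) <= M) -> Rabs (Rint f a b) <= M * Rabs (b - a).
Proof.
  intros p H. destruct (Rle_dec a b) as [Hab|Hab].
  - rewrite Rmin_left, Rmax_right in H by lra.
    pose proof (Rint_bound f a b (-M) M p Hab). rewrite (Rabs_right (b - a)) by lra.
    assert (-M * (b - a) <= Rint f a b <= M * (b - a)).
    { apply H0. intros x Hx. specialize (H x Hx). apply Rabs_le_inv in H. lra. }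
    apply Rabs_le. lra.
  - rewrite Rmin_right, Rmax_left in H by lra.
    pose proof (RiemannInt_P1 p) as p'.
    pose proof (Rint_chasles f a b a p p'). rewrite Rint_aa in H0.
    pose proof (Rint_bound f b a (-M) M p' ltac:(lra)).
    assert (-M * (a - b) <= Rint f b a <= M * (a - b)).
    { apply H1. intros x Hx. specialize (H x Hx). apply Rabs_le_inv in H. lra. }
    rewrite (Rabs_left (b - a)) by lra. apply Rabs_le. lra.
Qed.


Lemma inv_on_spec (P : R -> Prop) f y : (exists x, P x /\ f x = y) ->
  P (inv_on P f y) /\ f (inv_on P f y) = y.
Proof.
  intros Ex. unfold inv_on.
  destruct (epsilon_spec (inhabits 0)
    (fun x => (P x /\ f x = y) \/ (~ (exists x', P x' /\ f x' = y) /\ x = 0))) as [H|[H _]].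
  - destruct Ex as [x Hx]. exists x. left; auto.
  - exact H.
  - contradiction.
Qed.

Lemma inv_on_eq (P : R -> Prop) f x : (forall a b, P a -> P b -> f a = f b -> a = b) -> P x ->
  inv_on P f (f x) = x.
Proof.
  intros Inj Px. destruct (inv_on_spec P f (f x)) as [H1 H2]. exists x; auto.
  apply Inj; auto.
Qed.

Lemma ivt_le f a b y : a <= b -> (forall x, a <= x <= b -> continuity_pt f x) ->
  f a <= y <= f b -> exists x, a <= x <= b /\ f x = y.
Proof.
  intros Hab Hc Hy.
  destruct (Req_dec (f a) y) as [E|Na]. exists a; split; [lra|auto].
  destruct (Req_dec (f b) y) as [E|Nb]. exists b; split; [lra|auto].
  assert (a < b). { destruct (Req_dec a b); [subst; lra|lra]. }
  destruct (IVT_interv (fun x => f x - y) a b) as [z [Hz Ez]]; auto.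
  - intros x Hx. apply continuity_pt_minus; auto. apply continuity_pt_const. intros u v; reflexivity.
  - lra.
  - lra.
  - exists z. split; auto. lra.
Qed.

Lemma inv_cont (f : R -> R) lo x0 :
  (forall a b, lo <= a -> a < b -> f a < f b) ->
  (forall x, lo < x -> continuity_pt f x) -> lo < x0 ->
  continuity_pt (inv_on (fun x => lo <= x) f) (f x0).
Proof.
  intros Inc Cf Hx0.
  assert (Inj : forall a b, lo <= a -> lo <= b -> f a = f b -> a = b).
  { intros a b Ha Hb E. destruct (Rtotal_order a b) as [L|[L|L]]; auto.
    - pose proof (Inc a b Ha L); lra.
    - pose proof (Inc b a Hb L); lra. }
  apply cpt_intro. intros eps Heps.
  set (e := Rmin eps ((x0 - lo) / 2)).
  assert (He : 0 < e) by (apply Rmin_glb_lt; lra).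
  assert (He1 : e <= eps) by apply Rmin_l.
  assert (He2 : e <= (x0 - lo) / 2) by apply Rmin_r.
  pose proof (Inc (x0 - e) x0 ltac:(lra) ltac:(lra)) as L1.
  pose proof (Inc x0 (x0 + e) ltac:(lra) ltac:(lra)) as L2.
  exists (Rmin (f x0 - f (x0 - e)) (f (x0 + e) - f x0)). split.
  { apply Rmin_glb_lt; lra. }
  intros y Hy.
  assert (Hy1 : Rabs (y - f x0) < f x0 - f (x0 - e)) by (eapply Rlt_le_trans; [exact Hy| apply Rmin_l]).
  assert (Hy2 : Rabs (y - f x0) < f (x0 + e) - f x0) by (eapply Rlt_le_trans; [exact Hy| apply Rmin_r]).
  apply Rabs_inv_lt in Hy1. apply Rabs_inv_lt in Hy2.
  destruct (ivt_le f (x0 - e) (x0 + e) y ltac:(lra)) as [x [Hx Ex]].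
  { intros x Hx; apply Cf; lra. }
  { lra. }
  rewrite (inv_on_eq (fun x => lo <= x) f x0 Inj ltac:(simpl; lra)).
  rewrite <- Ex. rewrite (inv_on_eq (fun x => lo <= x) f x Inj ltac:(simpl; lra)).
  assert (x <> x0 - e). { intro; subst. lra. }
  assert (x <> x0 + e). { intro; subst. lra. }
  apply Rabs_intro. lra.
Qed.

Lemma integ_cont f a b : (forall x, Rmin a b <= x <= Rmax a b -> continuity_pt f x) ->
  Riemann_integrable f a b.
Proof.
  intros H. destruct (Rle_dec a b).
  - rewrite Rmin_left, Rmax_right in H by lra. apply continuity_implies_RiemannInt; auto.
  - rewrite Rmin_right, Rmax_left in H by lra. apply RiemannInt_P1.
    apply continuity_implies_RiemannInt; auto. lra.
Qed.

Lemma compare_eps (D : R -> R) a b eps : a <= b -> 0 < eps ->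
  (forall y, a < y <= b -> forall e, 0 < e -> exists d, 0 < d /\
      forall y', a <= y' <= y -> y - y' < d -> Rabs (D y' - D y) < e) ->
  (forall y, a <= y < b -> forall e, 0 < e -> exists d, 0 < d /\
      forall h, 0 < h < d -> y + h <= b -> D (y + h) - D y <= e * h) ->
  D b <= D a + eps * (b - a).
Proof.
  intros Hab Heps Hl Hr.
  set (S := fun y => a <= y <= b /\ forall s, a <= s <= y -> D s <= D a + eps * (s - a)).
  assert (Sa : S a). { split. lra. intros s Hs. replace s with a by lra. lra. }
  destruct (completeness S) as [sg [Hub Hlub]].
  { exists b. intros y [Hy _]. lra. }
  { exists a. exact Sa. }
  assert (Hsg1 : a <= sg) by (apply Hub; exact Sa).
  assert (Hsg2 : sg <= b). { apply Hlub. intros y [Hy _]; lra. }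
  assert (C1 : forall s, a <= s < sg -> D s <= D a + eps * (s - a)).
  { intros s Hs. destruct (classic (exists y, S y /\ s < y)) as [[y [[_ Hy] Hsy]]|N].
    - apply Hy. lra.
    - exfalso. assert (sg <= s). 2: lra. apply Hlub. intros y Sy.
      destruct (Rle_dec y s); auto. exfalso; apply N; exists y; split; auto; lra. }
  assert (C2 : D sg <= D a + eps * (sg - a)).
  { destruct (Req_dec sg a) as [E|Ne]. { rewrite E; lra. }
    destruct (Rle_dec (D sg) (D a + eps * (sg - a))) as [ok|nok]; auto. exfalso.
    set (g := D sg - (D a + eps * (sg - a))).
    destruct (Hl sg ltac:(lra) g ltac:(unfold g; lra)) as [d [Hd Hdd]].
    set (s := sg - Rmin d (sg - a) / 2).
    assert (0 < Rmin d (sg - a)) by (apply Rmin_glb_lt; lra).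
    assert (Rmin d (sg - a) <= d) by apply Rmin_l.
    assert (Rmin d (sg - a) <= sg - a) by apply Rmin_r.
    specialize (Hdd s ltac:(unfold s; lra) ltac:(unfold s; lra)).
    specialize (C1 s ltac:(unfold s; lra)). apply Rabs_inv_lt in Hdd.
    assert (eps * (s - a) <= eps * (sg - a)) by (apply Rmult_le_compat_l; unfold s; lra).
    unfold g in Hdd. lra. }
  assert (C3 : sg = b).
  { destruct (Req_dec sg b) as [E|Ne]; auto. exfalso.
    destruct (Hr sg ltac:(lra) eps Heps) as [d [Hd Hdd]].
    set (y' := sg + Rmin d (b - sg) / 2).
    assert (0 < Rmin d (b - sg)) by (apply Rmin_glb_lt; lra).
    assert (Rmin d (b - sg) <= d) by apply Rmin_l.
    assert (Rmin d (b - sg) <= b - sg) by apply Rmin_r.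
    assert (S y'). 
    { split. unfold y'; lra. intros s Hs.
      destruct (Rtotal_order s sg) as [Lt|[Eq|Gt]]. apply C1; lra. subst s; exact C2.
      unfold y' in Hs. specialize (Hdd (s - sg) ltac:(lra) ltac:(lra)).
      replace (sg + (s - sg)) with s in Hdd by ring. nra. }
    specialize (Hub y' H2). unfold y' in Hub. lra. }
  subst sg. exact C2.
Qed.

Lemma compare (D : R -> R) a b : a <= b ->
  (forall y, a < y <= b -> forall e, 0 < e -> exists d, 0 < d /\
      forall y', a <= y' <= y -> y - y' < d -> Rabs (D y' - D y) < e) ->
  (forall y, a <= y < b -> forall e, 0 < e -> exists d, 0 < d /\
      forall h, 0 < h < d -> y + h <= b -> D (y + h) - D y <= e * h) ->
  D b <= D a.
Proof.
  intros Hab Hl Hr. destruct (Rle_dec (D b) (D a)) as [ok|nok]; auto. exfalso.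
  set (eps := (D b - D a) / (2 * (b - a + 1))).
  assert (Heps : 0 < eps). { unfold eps. apply Rdiv_lt_0_compat; lra. }
  pose proof (compare_eps D a b eps Hab Heps Hl Hr).
  assert (eps * (b - a) < D b - D a). 2: lra.
  unfold eps. apply Rlt_le_trans with ((D b - D a) / (2 * (b - a + 1)) * (2 * (b - a + 1)) ).
  - apply Rmult_lt_compat_l. apply Rdiv_lt_0_compat; lra. lra.
  - right. field. lra.
Qed.


Lemma phi_exists phi : cont_nonneg phi -> strict_incr_nonneg phi ->
  (forall M, exists X, 0 <= X /\ forall x, X <= x -> M < phi x) ->
  forall y, phi 0 <= y -> exists x, 0 <= x /\ phi x = y.
Proof.
  intros Hc Hi Hl y Hy. destruct (Hl y) as [X [HX HXX]].
  destruct (ivt_le (fun x => phi (Rmax 0 x)) 0 X y HX) as [x [Hx Ex]].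
  { intros; apply cn_clamp; auto. }
  { rewrite !Rmax_right by lra. specialize (HXX X (Rle_refl _)). lra. }
  exists x. rewrite Rmax_right in Ex by lra. split; [lra|auto].
Qed.

Lemma phi_inv_spec phi : cont_nonneg phi -> strict_incr_nonneg phi ->
  (forall M, exists X, 0 <= X /\ forall x, X <= x -> M < phi x) ->
  forall y, phi 0 <= y -> 0 <= phi_inv phi y /\ phi (phi_inv phi y) = y.
Proof.
  intros Hc Hi Hl y Hy. apply inv_on_spec. apply phi_exists; auto.
Qed.

Lemma sinc_le phi a b : strict_incr_nonneg phi -> 0 <= a -> 0 <= b -> phi a <= phi b -> a <= b.
Proof.
  intros Hi Ha Hb H. destruct (Rle_dec a b); auto. pose proof (Hi b a Hb ltac:(lra)). lra.
Qed.

Lemma phi_inv_ge phi : cont_nonneg phi -> strict_incr_nonneg phi ->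
  (forall M, exists X, 0 <= X /\ forall x, X <= x -> M < phi x) ->
  forall a y, 0 <= a -> phi a <= y -> phi 0 <= y -> a <= phi_inv phi y.
Proof.
  intros Hc Hi Hl a y Ha H1 H2. destruct (phi_inv_spec phi Hc Hi Hl y H2) as [P1 P2].
  apply (sinc_le phi); auto. lra.
Qed.

Lemma phi_inv_mono phi : cont_nonneg phi -> strict_incr_nonneg phi ->
  (forall M, exists X, 0 <= X /\ forall x, X <= x -> M < phi x) ->
  forall y1 y2, phi 0 <= y1 -> y1 <= y2 -> phi_inv phi y1 <= phi_inv phi y2.
Proof.
  intros Hc Hi Hl y1 y2 H1 H2. destruct (phi_inv_spec phi Hc Hi Hl y1 H1) as [P1 P2].
  apply phi_inv_ge; auto; lra.
Qed.

Lemma phi_inv_pos phi : cont_nonneg phi -> strict_incr_nonneg phi ->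
  (forall M, exists X, 0 <= X /\ forall x, X <= x -> M < phi x) ->
  forall y, phi 0 < y -> 0 < phi_inv phi y.
Proof.
  intros Hc Hi Hl y H. destruct (phi_inv_spec phi Hc Hi Hl y ltac:(lra)) as [P1 P2].
  destruct P1 as [P1|P1]; auto. rewrite <- P1 in P2. lra.
Qed.

Lemma phi_inv_cont phi : cont_nonneg phi -> strict_incr_nonneg phi ->
  (forall M, exists X, 0 <= X /\ forall x, X <= x -> M < phi x) ->
  forall y, phi 0 < y -> continuity_pt (phi_inv phi) y.
Proof.
  intros Hc Hi Hl y H. pose proof (phi_inv_pos phi Hc Hi Hl y H).
  destruct (phi_inv_spec phi Hc Hi Hl y ltac:(lra)) as [P1 P2].
  rewrite <- P2. unfold phi_inv. apply inv_cont; auto.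
  intros; apply cn_pos; auto.
Qed.


Definition PhiH phi := cont_nonneg phi /\ strict_incr_nonneg phi /\
  (forall M, exists X, 0 <= X /\ forall x, X <= x -> M < phi x).

Definition GH eta phi x0 := PhiH phi /\
  (cont_nonneg eta /\ nondecr_nonneg eta /\ (forall x, 0 < x -> 0 < eta x)) /\
  phi 0 <= x0 /\
  (forall x, x0 < x -> exists l, lower_improper_limit (fun s => / eta (phi_inv phi s)) x0 x l) /\
  (forall M, exists X, x0 <= X /\ forall x, X <= x -> M < Gfun eta phi x0 x).

Lemma small_zero x : (forall e, 0 < e -> Rabs x < e) -> x = 0.
Proof.
  intros H. destruct (Req_dec x 0) as [E|Ne]; auto. exfalso.
  specialize (H (Rabs x) (Rabs_pos_lt _ Ne)). lra.
Qed.



Lemma iota_pos eta phi x0 : GH eta phi x0 -> forall s, x0 < s -> 0 < / eta (phi_inv phi s).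
Proof.
  intros [[P1 [P2 P3]] [[E1 [E2 E3]] [Hx0 _]]] s Hs.
  apply Rinv_0_lt_compat, E3, phi_inv_pos; auto. lra.
Qed.

Lemma iota_cont eta phi x0 : GH eta phi x0 -> forall s, x0 < s ->
  continuity_pt (fun s => / eta (phi_inv phi s)) s.
Proof.
  intros HH s Hs. pose proof (iota_pos _ _ _ HH s Hs) as Hp.
  destruct HH as [[P1 [P2 P3]] [[E1 [E2 E3]] [Hx0 _]]].
  apply (continuity_pt_inv (fun s => eta (phi_inv phi s))).
  - apply (continuity_pt_comp (phi_inv phi) eta). apply phi_inv_cont; auto; lra.
    apply cn_pos; auto. apply phi_inv_pos; auto; lra.
  - intro E. rewrite E in Hp. rewrite Rinv_0 in Hp. lra.
Qed.

Lemma iota_mono eta phi x0 : GH eta phi x0 -> forall s1 s2, x0 < s1 -> s1 <= s2 ->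
  / eta (phi_inv phi s2) <= / eta (phi_inv phi s1).
Proof.
  intros HH s1 s2 H1 H2. 
  destruct HH as [[P1 [P2 P3]] [[E1 [E2 E3]] [Hx0 _]]].
  apply Rinv_le_contravar. apply E3, phi_inv_pos; auto; lra.
  apply E2. apply phi_inv_spec; auto; lra. apply phi_inv_mono; auto; lra.
Qed.

Lemma iota_int eta phi x0 : GH eta phi x0 -> forall a b, x0 < a -> x0 < b ->
  Riemann_integrable (fun s => / eta (phi_inv phi s)) a b.
Proof.
  intros HH a b Ha Hb. apply integ_cont. intros x Hx. apply (iota_cont _ _ _ HH).
  assert (x0 < Rmin a b) by (apply Rmin_glb_lt; auto). lra.
Qed.

Lemma G_limit eta phi x0 : GH eta phi x0 -> forall b, x0 < b ->
  lower_improper_limit (fun s => / eta (phi_inv phi s)) x0 b (Gfun eta phi x0 b).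
Proof.
  intros HH b Hb. destruct HH as [_ [_ [_ [Hfin _]]]].
  unfold Gfun, ImpInt.
  match goal with |- context [epsilon ?i ?P] =>
    destruct (epsilon_spec i P) as [[_ H]|[N _]] end.
  - destruct (Hfin b Hb) as [l Hl]. exists l. left; auto.
  - exact H.
  - exfalso. apply N. split; auto.
Qed.

Lemma G_x0 eta phi x0 : Gfun eta phi x0 x0 = 0.
Proof.
  unfold Gfun, ImpInt.
  match goal with |- context [epsilon ?i ?P] =>
    destruct (epsilon_spec i P) as [[H _]|[_ H]] end.
  - exists 0. right. split; auto. intros [H _]; lra.
  - lra.
  - exact H.
Qed.

Lemma G_diff_lt eta phi x0 : GH eta phi x0 -> forall a b, x0 < a -> a <= b ->
  Gfun eta phi x0 b - Gfun eta phi x0 a = Rint (fun s => / eta (phi_inv phi s)) a b.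
Proof.
  intros HH a b Ha Hab.
  pose proof (G_limit _ _ _ HH a Ha) as La. pose proof (G_limit _ _ _ HH b ltac:(lra)) as Lb.
  assert (E : Gfun eta phi x0 b - Gfun eta phi x0 a - Rint (fun s => / eta (phi_inv phi s)) a b = 0).
  2: lra.
  apply small_zero. intros e He.
  destruct (La (e/2) ltac:(lra)) as [d1 [Hd1 H1]].
  destruct (Lb (e/2) ltac:(lra)) as [d2 [Hd2 H2]].
  set (m := Rmin (Rmin d1 d2) (a - x0)).
  assert (0 < m) by (unfold m; repeat apply Rmin_glb_lt; lra).
  assert (m <= d1) by (unfold m; eapply Rle_trans; [apply Rmin_l| apply Rmin_l]).
  assert (m <= d2) by (unfold m; eapply Rle_trans; [apply Rmin_l| apply Rmin_r]).
  assert (m <= a - x0) by (unfold m; apply Rmin_r).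
  set (c := x0 + m / 2).
  specialize (H1 c ltac:(unfold c; lra) ltac:(unfold c; lra)).
  specialize (H2 c ltac:(unfold c; lra) ltac:(unfold c; lra)).
  rewrite <- (Rint_chasles _ c a b) in H2 by (apply (iota_int _ _ _ HH); unfold c; lra).
  apply Rabs_inv_lt in H1; apply Rabs_inv_lt in H2. apply Rabs_intro. lra.
Qed.

Lemma Rint_swap f a b : Riemann_integrable f a b -> Rint f b a = - Rint f a b.
Proof.
  intros p. pose proof (Rint_chasles f a b a p (RiemannInt_P1 p)). rewrite Rint_aa in H. lra.
Qed.

Lemma G_diff eta phi x0 : GH eta phi x0 -> forall a b, x0 < a -> x0 < b ->
  Gfun eta phi x0 b - Gfun eta phi x0 a = Rint (fun s => / eta (phi_inv phi s)) a b.
Proof.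
  intros HH a b Ha Hb. destruct (Rle_dec a b). apply G_diff_lt; auto.
  rewrite (Rint_swap _ b a) by (apply (iota_int _ _ _ HH); lra).
  rewrite <- (G_diff_lt _ _ _ HH b a); auto; lra.
Qed.

Notation iota eta phi := (fun s => / eta (phi_inv phi s)).

Lemma iota_Rint_lb eta phi x0 : GH eta phi x0 -> forall a b, x0 < a -> a <= b ->
  / eta (phi_inv phi b) * (b - a) <= Rint (iota eta phi) a b.
Proof.
  intros HH a b Ha Hab.
  apply (Rint_bound _ a b _ (/ eta (phi_inv phi a))); auto. apply (iota_int _ _ _ HH); lra.
  intros x Hx. split; apply (iota_mono _ _ _ HH); lra.
Qed.

Lemma G_pos eta phi x0 : GH eta phi x0 -> forall x, x0 < x -> 0 < Gfun eta phi x0 x.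
Proof.
  intros HH x Hx. set (m := (x0 + x) / 2).
  pose proof (iota_Rint_lb _ _ _ HH m x ltac:(unfold m; lra) ltac:(unfold m; lra)).
  pose proof (iota_pos _ _ _ HH x Hx).
  assert (0 < / eta (phi_inv phi x) * (x - m)) by (apply Rmult_lt_0_compat; unfold m; lra).
  destruct (Rlt_dec 0 (Gfun eta phi x0 x)) as [ok|nok]; auto. exfalso.
  set (e := Rint (iota eta phi) m x - Gfun eta phi x0 x).
  destruct (G_limit _ _ _ HH x Hx e ltac:(unfold e; lra)) as [d [Hd Hdd]].
  set (c := x0 + Rmin d (m - x0) / 2).
  assert (0 < Rmin d (m - x0)) by (apply Rmin_glb_lt; unfold m; lra).
  assert (Rmin d (m - x0) <= d) by apply Rmin_l.
  assert (Rmin d (m - x0) <= m - x0) by apply Rmin_r.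
  specialize (Hdd c ltac:(unfold c; lra) ltac:(unfold c, m in *; lra)).
  rewrite <- (Rint_chasles _ c m x) in Hdd by (apply (iota_int _ _ _ HH); unfold c, m in *; lra).
  assert (0 <= Rint (iota eta phi) c m).
  { apply Rint_nonneg. apply (iota_int _ _ _ HH); unfold c, m in *; lra. unfold c, m in *; lra.
    intros y Hy. left. apply (iota_pos _ _ _ HH). unfold c, m in *; lra. }
  apply Rabs_inv_lt in Hdd. unfold e in Hdd. lra.
Qed.

Lemma G_sinc eta phi x0 : GH eta phi x0 -> forall a b, x0 <= a -> a < b ->
  Gfun eta phi x0 a < Gfun eta phi x0 b.
Proof.
  intros HH a b Ha Hab. destruct Ha as [Ha|Ha].
  - pose proof (G_diff _ _ _ HH a b Ha ltac:(lra)).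
    pose proof (iota_Rint_lb _ _ _ HH a b Ha ltac:(lra)).
    pose proof (iota_pos _ _ _ HH b ltac:(lra)).
    assert (0 < / eta (phi_inv phi b) * (b - a)) by (apply Rmult_lt_0_compat; lra). lra.
  - subst. rewrite G_x0. apply (G_pos _ _ _ HH); auto.
Qed.

Lemma G_cont eta phi x0 : GH eta phi x0 -> forall x, x0 < x -> continuity_pt (Gfun eta phi x0) x.
Proof.
  intros HH x Hx. apply cpt_intro. intros e He.
  set (m := (x0 + x) / 2). set (M := / eta (phi_inv phi m)).
  assert (0 < M) by (apply (iota_pos _ _ _ HH); unfold m; lra).
  exists (Rmin (x - m) (e / (M + 1))). split.
  { apply Rmin_glb_lt. unfold m; lra. apply Rdiv_lt_0_compat; lra. }
  intros y Hy.
  assert (Hy1 : Rabs (y - x) < x - m) by (eapply Rlt_le_trans; [exact Hy|apply Rmin_l]).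
  assert (Hy2 : Rabs (y - x) < e / (M + 1)) by (eapply Rlt_le_trans; [exact Hy|apply Rmin_r]).
  pose proof (Rabs_inv_lt _ _ Hy1).
  rewrite (G_diff _ _ _ HH x y Hx) by (unfold m in *; lra).
  eapply Rle_lt_trans. apply (Rint_abs_bound _ x y M). apply (iota_int _ _ _ HH); unfold m in *; lra.
  { intros z Hz. assert (m < z).
    { assert (m < Rmin x y) by (apply Rmin_glb_lt; unfold m in *; lra). lra. }
    rewrite Rabs_right. apply (iota_mono _ _ _ HH); unfold m in *; lra.
    left. apply (iota_pos _ _ _ HH); unfold m in *; lra. }
  apply Rle_lt_trans with (M * (e / (M + 1))).
  apply Rmult_le_compat_l; lra.
  apply Rlt_le_trans with ((M + 1) * (e / (M + 1))).
  apply Rmult_lt_compat_r. apply Rdiv_lt_0_compat; lra. lra.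
  right; field; lra.
Qed.

Lemma G_surj eta phi x0 : GH eta phi x0 -> forall q, 0 < q ->
  exists x, x0 < x /\ Gfun eta phi x0 x = q.
Proof.
  intros HH q Hq. set (b := x0 + 1).
  destruct (G_limit _ _ _ HH b ltac:(unfold b; lra) q Hq) as [d [Hd Hdd]].
  set (c := x0 + Rmin d 1 / 2).
  assert (0 < Rmin d 1) by (apply Rmin_glb_lt; lra).
  assert (Rmin d 1 <= d) by apply Rmin_l. assert (Rmin d 1 <= 1) by apply Rmin_r.
  specialize (Hdd c ltac:(unfold c; lra) ltac:(unfold c, b; lra)).
  rewrite <- (G_diff _ _ _ HH c b) in Hdd by (unfold c, b; lra).
  apply Rabs_inv_lt in Hdd.
  pose proof (G_pos _ _ _ HH c ltac:(unfold c; lra)).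
  pose proof HH as HH'. destruct HH' as (A1 & A2 & A3 & A4 & A5). destruct (A5 q) as [X [HX HXX]].
  set (b' := Rmax X c).
  assert (Hb1 : X <= b') by apply Rmax_l. assert (Hb2 : c <= b') by apply Rmax_r.
  specialize (HXX b' Hb1).
  destruct (ivt_le (Gfun eta phi x0) c b' q Hb2) as [x [Hx Ex]].
  { intros; apply (G_cont _ _ _ HH). unfold c in *; lra. }
  { lra. }
  exists x. split; auto. unfold c in *; lra.
Qed.

Lemma Ginv_spec eta phi x0 : GH eta phi x0 -> forall q, 0 < q ->
  x0 < G_inv eta phi x0 q /\ Gfun eta phi x0 (G_inv eta phi x0 q) = q.
Proof.
  intros HH q Hq. destruct (inv_on_spec (fun x => x0 <= x) (Gfun eta phi x0) q) as [H1 H2].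
  { destruct (G_surj _ _ _ HH q Hq) as [x [Hx Ex]]. exists x; split; auto; lra. }
  fold (G_inv eta phi x0 q) in H1, H2. split; auto.
  destruct H1 as [H1|H1]; auto. rewrite <- H1, G_x0 in H2. lra.
Qed.

Lemma G_inj eta phi x0 : GH eta phi x0 -> forall a b, x0 <= a -> x0 <= b ->
  Gfun eta phi x0 a = Gfun eta phi x0 b -> a = b.
Proof.
  intros HH a b Ha Hb E. destruct (Rtotal_order a b) as [L|[L|L]]; auto.
  - pose proof (G_sinc _ _ _ HH a b Ha L); lra.
  - pose proof (G_sinc _ _ _ HH b a Hb L); lra.
Qed.

Lemma Ginv_G eta phi x0 : GH eta phi x0 -> forall x, x0 <= x ->
  G_inv eta phi x0 (Gfun eta phi x0 x) = x.
Proof.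
  intros HH x Hx. unfold G_inv. apply inv_on_eq; auto. intros; apply (G_inj _ _ _ HH); auto.
Qed.

Lemma Ginv_mono eta phi x0 : GH eta phi x0 -> forall q1 q2, 0 < q1 -> q1 <= q2 ->
  G_inv eta phi x0 q1 <= G_inv eta phi x0 q2.
Proof.
  intros HH q1 q2 H1 H2. destruct (Ginv_spec _ _ _ HH q1 H1) as [A1 A2].
  destruct (Ginv_spec _ _ _ HH q2 ltac:(lra)) as [B1 B2].
  destruct (Rle_dec (G_inv eta phi x0 q1) (G_inv eta phi x0 q2)); auto.
  pose proof (G_sinc _ _ _ HH (G_inv eta phi x0 q2) (G_inv eta phi x0 q1) ltac:(lra) ltac:(lra)). lra.
Qed.

Lemma Ginv_cont eta phi x0 : GH eta phi x0 -> forall q, 0 < q ->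
  continuity_pt (G_inv eta phi x0) q.
Proof.
  intros HH q Hq. destruct (Ginv_spec _ _ _ HH q Hq) as [A1 A2].
  rewrite <- A2. unfold G_inv at 1. apply inv_cont; auto.
  - intros; apply (G_sinc _ _ _ HH); auto.
  - intros; apply (G_cont _ _ _ HH); auto.
Qed.


Definition WH eta w phi x0 := GH eta phi x0 /\
  (cont_nonneg w /\ nondecr_nonneg w /\ (forall x, 0 < x -> 0 < w x)).

Notation Wf eta w phi x0 := (fun s => w (phi_inv phi (G_inv eta phi x0 s))).
Notation kap eta w phi x0 := (fun s => / w (phi_inv phi (G_inv eta phi x0 s))).

Lemma phiGinv_pos eta w phi x0 : WH eta w phi x0 -> forall s, 0 < s ->
  0 < phi_inv phi (G_inv eta phi x0 s).
Proof.
  intros [HH _] s Hs. destruct (Ginv_spec _ _ _ HH s Hs).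
  pose proof HH as (P & _ & Hx0 & _). destruct P as (P1 & P2 & P3).
  apply phi_inv_pos; auto. lra.
Qed.

Lemma W_pos eta w phi x0 : WH eta w phi x0 -> forall s, 0 < s -> 0 < Wf eta w phi x0 s.
Proof.
  intros WW s Hs. pose proof (phiGinv_pos _ _ _ _ WW s Hs). destruct WW as [_ (W1 & W2 & W3)].
  apply W3; auto.
Qed.

Lemma W_mono eta w phi x0 : WH eta w phi x0 -> forall s1 s2, 0 < s1 -> s1 <= s2 ->
  Wf eta w phi x0 s1 <= Wf eta w phi x0 s2.
Proof.
  intros WW s1 s2 H1 H2. pose proof (phiGinv_pos _ _ _ _ WW s1 H1).
  destruct WW as [HH (W1 & W2 & W3)]. apply W2. lra.
  pose proof HH as (P & _ & Hx0 & _). destruct P as (P1 & P2 & P3).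
  destruct (Ginv_spec _ _ _ HH s1 H1).
  apply phi_inv_mono; auto. lra. apply (Ginv_mono _ _ _ HH); auto.
Qed.

Lemma W_cont eta w phi x0 : WH eta w phi x0 -> forall s, 0 < s -> continuity_pt (Wf eta w phi x0) s.
Proof.
  intros WW s Hs. pose proof (phiGinv_pos _ _ _ _ WW s Hs).
  destruct WW as [HH (W1 & W2 & W3)].
  pose proof HH as (P & _ & Hx0 & _). destruct P as (P1 & P2 & P3).
  destruct (Ginv_spec _ _ _ HH s Hs).
  apply (continuity_pt_comp (G_inv eta phi x0) (fun a => w (phi_inv phi a))).
  apply (Ginv_cont _ _ _ HH); auto.
  apply (continuity_pt_comp (phi_inv phi) w). apply phi_inv_cont; auto; lra.
  apply cn_pos; auto.
Qed.

Lemma kap_pos eta w phi x0 : WH eta w phi x0 -> forall s, 0 < s -> 0 < kap eta w phi x0 s.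
Proof. intros; apply Rinv_0_lt_compat, W_pos; auto. Qed.

Lemma kap_mono eta w phi x0 : WH eta w phi x0 -> forall s1 s2, 0 < s1 -> s1 <= s2 ->
  kap eta w phi x0 s2 <= kap eta w phi x0 s1.
Proof.
  intros WW s1 s2 H1 H2. apply Rinv_le_contravar. apply W_pos; auto.
  apply (W_mono _ _ _ _ WW); auto.
Qed.

Lemma kap_int eta w phi x0 : WH eta w phi x0 -> forall a b, 0 < a -> 0 < b ->
  Riemann_integrable (kap eta w phi x0) a b.
Proof.
  intros WW a b Ha Hb. apply integ_cont. intros x Hx.
  assert (0 < Rmin a b) by (apply Rmin_glb_lt; auto).
  apply (continuity_pt_inv (Wf eta w phi x0)). apply W_cont; auto; lra.
  pose proof (W_pos _ _ _ _ WW x ltac:(lra)). lra.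
Qed.

Lemma Psi_diff eta w phi x0 x1 : WH eta w phi x0 -> 0 < x1 -> forall a b, 0 < a -> 0 < b ->
  Psi eta w phi x0 x1 b - Psi eta w phi x0 x1 a = Rint (kap eta w phi x0) a b.
Proof.
  intros WW Hx1 a b Ha Hb. unfold Psi.
  rewrite <- (Rint_chasles _ x1 a b) by (apply (kap_int _ _ _ _ WW); auto). ring.
Qed.

Lemma Psi_lb eta w phi x0 x1 : WH eta w phi x0 -> 0 < x1 -> forall a b, 0 < a -> a <= b ->
  kap eta w phi x0 b * (b - a) <= Psi eta w phi x0 x1 b - Psi eta w phi x0 x1 a
    <= kap eta w phi x0 a * (b - a).
Proof.
  intros WW Hx1 a b Ha Hab. rewrite (Psi_diff _ _ _ _ _ WW Hx1 a b Ha ltac:(lra)).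
  apply Rint_bound; auto. apply (kap_int _ _ _ _ WW); lra.
  intros x Hx. split; apply (kap_mono _ _ _ _ WW); lra.
Qed.

Lemma Psi_sinc eta w phi x0 x1 : WH eta w phi x0 -> 0 < x1 -> forall a b, 0 < a -> a < b ->
  Psi eta w phi x0 x1 a < Psi eta w phi x0 x1 b.
Proof.
  intros WW Hx1 a b Ha Hab. pose proof (Psi_lb _ _ _ _ _ WW Hx1 a b Ha ltac:(lra)).
  pose proof (kap_pos _ _ _ _ WW b ltac:(lra)).
  assert (0 < kap eta w phi x0 b * (b - a)) by (apply Rmult_lt_0_compat; lra). lra.
Qed.

Lemma Psi_cont eta w phi x0 x1 : WH eta w phi x0 -> 0 < x1 -> forall x, 0 < x ->
  continuity_pt (Psi eta w phi x0 x1) x.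
Proof.
  intros WW Hx1 x Hx. apply cpt_intro. intros e He.
  set (m := x / 2). set (M := kap eta w phi x0 m).
  assert (0 < M) by (apply (kap_pos _ _ _ _ WW); unfold m; lra).
  exists (Rmin (x - m) (e / (M + 1))). split.
  { apply Rmin_glb_lt. unfold m; lra. apply Rdiv_lt_0_compat; lra. }
  intros y Hy.
  assert (Hy1 : Rabs (y - x) < x - m) by (eapply Rlt_le_trans; [exact Hy|apply Rmin_l]).
  assert (Hy2 : Rabs (y - x) < e / (M + 1)) by (eapply Rlt_le_trans; [exact Hy|apply Rmin_r]).
  pose proof (Rabs_inv_lt _ _ Hy1).
  rewrite (Psi_diff _ _ _ _ _ WW Hx1 x y Hx) by (unfold m in *; lra).
  eapply Rle_lt_trans. apply (Rint_abs_bound _ x y M). apply (kap_int _ _ _ _ WW); unfold m in *; lra.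
  { intros z Hz. assert (m < z).
    { assert (m < Rmin x y) by (apply Rmin_glb_lt; unfold m in *; lra). lra. }
    rewrite Rabs_right. apply (kap_mono _ _ _ _ WW); unfold m in *; lra.
    left. apply (kap_pos _ _ _ _ WW); unfold m in *; lra. }
  apply Rle_lt_trans with (M * (e / (M + 1))).
  apply Rmult_le_compat_l; lra.
  apply Rlt_le_trans with ((M + 1) * (e / (M + 1))).
  apply Rmult_lt_compat_r. apply Rdiv_lt_0_compat; lra. lra.
  right; field; lra.
Qed.

Lemma Psi_inv_spec eta w phi x0 x1 : WH eta w phi x0 -> 0 < x1 -> forall X,
  (exists x, 0 < x /\ Psi eta w phi x0 x1 x = X) ->
  0 < Psi_inv eta w phi x0 x1 X /\ Psi eta w phi x0 x1 (Psi_inv eta w phi x0 x1 X) = X.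
Proof. intros WW Hx1 X Ex. apply inv_on_spec. exact Ex. Qed.

Lemma Psi_inv_ge eta w phi x0 x1 : WH eta w phi x0 -> 0 < x1 -> forall X a,
  (exists x, 0 < x /\ Psi eta w phi x0 x1 x = X) -> 0 < a -> Psi eta w phi x0 x1 a <= X ->
  a <= Psi_inv eta w phi x0 x1 X.
Proof.
  intros WW Hx1 X a Ex Ha Hle. destruct (Psi_inv_spec _ _ _ _ _ WW Hx1 X Ex) as [A1 A2].
  destruct (Rle_dec a (Psi_inv eta w phi x0 x1 X)); auto.
  pose proof (Psi_sinc _ _ _ _ _ WW Hx1 _ a A1 ltac:(lra)). lra.
Qed.


Lemma cn_of_clamp h : (forall x, 0 <= x -> continuity_pt (fun y => h (Rmax 0 y)) x) -> cont_nonneg h.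
Proof.
  intros H x Hx e He. destruct (cpt_elim _ _ (H x Hx) e He) as [d [Hd Hy]].
  exists d; split; auto. intros y Hy0 Hyd. specialize (Hy y Hyd).
  rewrite !Rmax_right in Hy by lra. exact Hy.
Qed.

Lemma cn_plus a b : cont_nonneg a -> cont_nonneg b -> cont_nonneg (fun s => a s + b s).
Proof.
  intros Ha Hb. apply cn_of_clamp. intros x _.
  apply (continuity_pt_plus (fun y => a (Rmax 0 y)) (fun y => b (Rmax 0 y))); apply cn_clamp; auto.
Qed.

Lemma cn_mult a b : cont_nonneg a -> cont_nonneg b -> cont_nonneg (fun s => a s * b s).
Proof.
  intros Ha Hb. apply cn_of_clamp. intros x _.
  apply (continuity_pt_mult (fun y => a (Rmax 0 y)) (fun y => b (Rmax 0 y))); apply cn_clamp; auto.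
Qed.

Lemma cn_compose a b : cont_nonneg a -> cont_nonneg b -> (forall x, 0 <= x -> 0 <= b x) ->
  cont_nonneg (fun s => a (b s)).
Proof.
  intros Ha Hb Hp x Hx e He. destruct (Ha (b x) (Hp x Hx) e He) as [d [Hd H1]].
  destruct (Hb x Hx d Hd) as [d2 [Hd2 H2]]. exists d2; split; auto.
Qed.

Lemma cn_slice f t : cont2_nonneg f -> 0 <= t -> cont_nonneg (f t).
Proof.
  intros Hf Ht x Hx e He. destruct (Hf t x Ht Hx e He) as [d [Hd H]].
  exists d; split; auto. intros y Hy Hyd. apply H; auto. rewrite Rminus_diag, Rabs_R0; auto.
Qed.

Lemma cn_int h a b : cont_nonneg h -> 0 <= a -> 0 <= b -> Riemann_integrable h a b.
Proof.
  intros Hh Ha Hb. refine (@Riemann_integrable_ext (fun y => h (Rmax 0 y)) h a b _ _).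
  - intros x Hx. assert (0 <= Rmin a b) by (apply Rmin_glb; auto). rewrite Rmax_right; auto; lra.
  - apply integ_cont. intros; apply cn_clamp; auto.
Qed.

Lemma cn_bound h b : cont_nonneg h -> 0 <= b -> exists M, 0 <= M /\
  forall x, 0 <= x <= b -> Rabs (h x) <= M.
Proof.
  intros Hh Hb.
  destruct (continuity_ab_maj (fun y => Rabs (h (Rmax 0 y))) 0 b Hb) as [Mx [H1 H2]].
  { intros c Hc. apply (continuity_pt_comp (fun y => h (Rmax 0 y)) Rabs). apply cn_clamp; auto.
    apply Rcontinuity_abs. }
  exists (Rabs (h (Rmax 0 Mx))). split. apply Rabs_pos.
  intros x Hx. specialize (H1 x Hx). simpl in H1. rewrite Rmax_right in H1 by lra. exact H1.
Qed.

Definition cw (a b : R) (h : R -> R) (y : R) := forall e, 0 < e -> exists d, 0 < d /\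
  forall y', a <= y' <= b -> Rabs (y' - y) < d -> Rabs (h y' - h y) < e.

Lemma cw_lip a b h y M : 0 <= M -> (forall y', a <= y' <= b -> Rabs (h y' - h y) <= M * Rabs (y' - y)) ->
  cw a b h y.
Proof.
  intros HM H e He. exists (e / (M + 1)). split. apply Rdiv_lt_0_compat; lra.
  intros y' Hy' Hd. eapply Rle_lt_trans. apply H; auto.
  apply Rle_lt_trans with (M * (e / (M + 1))). apply Rmult_le_compat_l; lra.
  apply Rlt_le_trans with ((M + 1) * (e / (M + 1))).
  apply Rmult_lt_compat_r. apply Rdiv_lt_0_compat; lra. lra. right; field; lra.
Qed.

Lemma cw_comp a b h F y : cw a b h y -> continuity_pt F (h y) -> cw a b (fun s => F (h s)) y.
Proof.
  intros Hh HF e He. destruct (cpt_elim _ _ HF e He) as [d [Hd H1]].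
  destruct (Hh d Hd) as [d2 [Hd2 H2]]. exists d2; split; auto.
Qed.

Lemma cw_plus a b h k y : cw a b h y -> cw a b k y -> cw a b (fun s => h s + k s) y.
Proof.
  intros Hh Hk e He. destruct (Hh (e/2) ltac:(lra)) as [d1 [Hd1 H1]].
  destruct (Hk (e/2) ltac:(lra)) as [d2 [Hd2 H2]].
  exists (Rmin d1 d2). split. apply Rmin_glb_lt; auto.
  intros y' Hy' Hd. 
  specialize (H1 y' Hy' ltac:(eapply Rlt_le_trans; [exact Hd|apply Rmin_l])).
  specialize (H2 y' Hy' ltac:(eapply Rlt_le_trans; [exact Hd|apply Rmin_r])).
  apply Rabs_inv_lt in H1; apply Rabs_inv_lt in H2. apply Rabs_intro. lra.
Qed.

Lemma cw_opp a b h y : cw a b h y -> cw a b (fun s => - h s) y.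
Proof.
  intros Hh e He. destruct (Hh e He) as [d [Hd H]]. exists d; split; auto.
  intros y' Hy' Hd'. specialize (H y' Hy' Hd'). replace (- h y' - - h y) with (- (h y' - h y)) by ring.
  rewrite Rabs_Ropp; auto.
Qed.

Lemma cw_const a b c y : cw a b (fun _ => c) y.
Proof. intros e He. exists 1; split. lra. intros. rewrite Rminus_diag, Rabs_R0; auto. Qed.

Lemma cw_int h Y y : cont_nonneg h -> 0 <= Y -> 0 <= y <= Y -> cw 0 Y (fun s => Rint h 0 s) y.
Proof.
  intros Hh HY Hy. destruct (cn_bound h Y Hh HY) as [M [HM HB]].
  apply (cw_lip _ _ _ _ M HM). intros y' Hy'.
  assert (Rint h 0 y' - Rint h 0 y = Rint h y y').
  { rewrite <- (Rint_chasles h 0 y y') by (apply cn_int; auto; lra). ring. }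
  rewrite H. apply Rint_abs_bound. apply cn_int; auto; lra.
  intros x Hx. apply HB. assert (0 <= Rmin y y') by (apply Rmin_glb; lra).
  assert (Rmax y y' <= Y) by (apply Rmax_lub; lra). lra.
Qed.

Lemma cw_minus a b h k y : cw a b h y -> cw a b k y -> cw a b (fun s => h s - k s) y.
Proof.
  intros Hh Hk. unfold Rminus. apply (cw_plus a b h (fun s => - k s)); auto. apply cw_opp; auto.
Qed.


Lemma main_part
  (f g : R -> R -> R) (phi c eta w alpha u : R -> R) (x0 x1 : R)
  (Hf_cont : cont2_nonneg f) (Hf_nn : forall t s, 0 <= t -> 0 <= s -> 0 <= f t s)
  (Hg_cont : cont2_nonneg g) (Hg_nn : forall t s, 0 <= t -> 0 <= s -> 0 <= g t s)
  (Hf_mon : forall s, 0 <= s -> nondecr_nonneg (fun t => f t s))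
  (Hg_mon : forall s, 0 <= s -> nondecr_nonneg (fun t => g t s))
  (PH : PhiH phi) (WW : WH eta w phi x0)
  (Heta_nn : forall x, 0 <= x -> 0 <= eta x) (Hw_nn : forall x, 0 <= x -> 0 <= w x)
  (Hc_cont : cont_nonneg c) (Hc_pos : forall x, 0 <= x -> 0 < c x)
  (Hc_mon : nondecr_nonneg c)
  (Hx0 : phi 0 <= x0 < c 0) (Hx1 : 0 < x1)
  (Halpha_nn : forall t, 0 <= t -> 0 <= alpha t)
  (Halpha_le : forall t, 0 <= t -> alpha t <= t)
  (Hu_cont : cont_nonneg u) (Hu_nn : forall t, 0 <= t -> 0 <= u t)
  (Hu : forall t, 0 <= t ->
     phi (u t) <= c t + Rint (fun s => f t s * eta (u s) * w (u s) + g t s * eta (u s))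
                              0 (alpha t))
  (T : R) (HT : 0 <= T)
  (Hrng : exists x, 0 < x /\ Psi eta w phi x0 x1 x =
       Psi eta w phi x0 x1 (Gfun eta phi x0 (c T) + Rint (g T) 0 (alpha T)) + Rint (f T) 0 (alpha T)) :
  u T <= phi_inv phi (G_inv eta phi x0
               (Psi_inv eta w phi x0 x1
                  (Psi eta w phi x0 x1 (Gfun eta phi x0 (c T) + Rint (g T) 0 (alpha T))
                    + Rint (f T) 0 (alpha T)))).
Proof.
  pose proof WW as [HH (Hw_cont & Hw_mon & Hw_pos)].
  pose proof HH as (_ & (Heta_cont & Heta_mon & Heta_pos) & _ & _ & _).
  pose proof PH as (Hphi_cont & Hphi_incr & Hphi_lim).
  set (Y := alpha T).
  assert (HY : 0 <= Y <= T) by (split; [apply Halpha_nn| apply Halpha_le]; auto).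
  set (K := c T).
  set (H := fun s => f T s * eta (u s) * w (u s) + g T s * eta (u s)).
  assert (cnH : cont_nonneg H).
  { unfold H. apply cn_plus; repeat apply cn_mult; try apply cn_slice; auto;
    apply cn_compose; auto. }
  assert (Hnn : forall s, 0 <= s -> 0 <= H s).
  { intros s Hs. unfold H. pose proof (Hf_nn T s HT Hs). pose proof (Hg_nn T s HT Hs).
    pose proof (Heta_nn (u s) (Hu_nn s Hs)). pose proof (Hw_nn (u s) (Hu_nn s Hs)).
    apply Rplus_le_le_0_compat; repeat apply Rmult_le_pos; auto. }
  set (v := fun y => K + Rint H 0 y).
  assert (vmono : forall a b, 0 <= a <= b -> v a <= v b).
  { intros a b Hab. unfold v. rewrite <- (Rint_chasles H 0 a b) by (apply cn_int; auto; lra).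
    assert (0 <= Rint H a b). apply Rint_nonneg. apply cn_int; auto; lra. lra.
    intros; apply Hnn; lra. lra. }
  assert (vK : forall y, 0 <= y -> K <= v y).
  { intros y Hy. pose proof (vmono 0 y ltac:(lra)). unfold v in *. rewrite Rint_aa in H0. lra. }
  assert (Kx0 : x0 < K). { unfold K. pose proof (Hc_mon 0 T (Rle_refl 0) HT). lra. }
  assert (F1 : forall s, 0 <= s <= T -> phi (u s) <= v (alpha s)).
  { intros s Hs. pose proof (Hu s ltac:(lra)). pose proof (Halpha_nn s ltac:(lra)).
    assert (c s <= K) by (apply Hc_mon; lra).
    assert (Rint (fun r => f s r * eta (u r) * w (u r) + g s r * eta (u r)) 0 (alpha s)
             <= Rint H 0 (alpha s)).
    { apply Rint_le; auto. 
      - apply cn_int; auto; try lra. apply cn_plus; repeat apply cn_mult; try apply cn_slice; auto; try lra;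
        apply cn_compose; auto.
      - apply cn_int; auto; lra.
      - intros r Hr. unfold H.
        pose proof (Heta_nn (u r) (Hu_nn r ltac:(lra))). pose proof (Hw_nn (u r) (Hu_nn r ltac:(lra))).
        assert (f s r <= f T r) by (apply (Hf_mon r); lra).
        assert (g s r <= g T r) by (apply (Hg_mon r); lra).
        assert (0 <= eta (u r) * w (u r)) by (apply Rmult_le_pos; auto).
        rewrite !Rmult_assoc.
        apply Rplus_le_compat; apply Rmult_le_compat_r; auto. }
    unfold v. lra. }
  assert (F2 : forall s, 0 <= s <= T -> phi (u s) <= v s).
  { intros s Hs. pose proof (F1 s Hs). pose proof (vmono (alpha s) s).
    assert (alpha s <= s) by (apply Halpha_le; lra). pose proof (Halpha_nn s ltac:(lra)). 
    assert (v (alpha s) <= v s) by (apply vmono; lra). lra. }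
  set (z := fun y => Gfun eta phi x0 (v y)).
  set (Gi := fun y => Rint (g T) 0 y).
  set (Fi := fun y => Rint (f T) 0 y).
  set (m := fun y => z y + (Gi Y - Gi y)).
  set (D := fun y => Psi eta w phi x0 x1 (m y) - Fi y).
  assert (cng : cont_nonneg (g T)) by (apply cn_slice; auto).
  assert (cnf : cont_nonneg (f T)) by (apply cn_slice; auto).
  assert (zpos : forall y, 0 <= y -> 0 < z y).
  { intros y Hy. apply (G_pos _ _ _ HH). pose proof (vK y Hy). lra. }
  assert (mz : forall y, 0 <= y <= Y -> z y <= m y).
  { intros y Hy. unfold m, Gi. rewrite <- (Rint_chasles (g T) 0 y Y) by (apply cn_int; auto; lra).
    assert (0 <= Rint (g T) y Y). apply Rint_nonneg. apply cn_int; auto; lra. lra.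
    intros; apply Hg_nn; lra. lra. }
  assert (CMP : D Y <= D 0).
  { apply compare. lra.
    - intros y Hy e He.
      assert (CW : cw 0 Y D y).
      { unfold D. apply cw_minus. 2: apply cw_int; auto; lra.
        apply (cw_comp 0 Y m). 2: { apply Psi_cont; auto. pose proof (zpos y ltac:(lra)).
                                    pose proof (mz y ltac:(lra)). lra. }
        unfold m. apply cw_plus. 2: apply cw_minus. 2: apply cw_const. 2: apply cw_int; auto; lra.
        apply (cw_comp 0 Y v). 2: { apply (G_cont _ _ _ HH). pose proof (vK y ltac:(lra)). lra. }
        unfold v. apply cw_plus. apply cw_const. apply cw_int; auto; lra. }
      destruct (CW e He) as [d [Hd Hdd]]. exists d. split; auto.
      intros y' Hy' Hd'. apply Hdd. lra. apply Rabs_intro. lra.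
    - intros y Hy e He.
      assert (HyT : 0 <= y <= T) by lra.
      set (V := v y).
      assert (HV : x0 < V) by (pose proof (vK y ltac:(lra)); unfold V in *; lra).
      assert (Hpv : phi 0 < V) by lra.
      pose proof (phi_inv_pos phi Hphi_cont Hphi_incr Hphi_lim V Hpv) as Hpi.
      set (E := eta (phi_inv phi V)). set (Wv := w (phi_inv phi V)).
      assert (HE : 0 < E) by (apply Heta_pos; auto).
      assert (HWv : 0 < Wv) by (apply Hw_pos; auto).
      assert (Huy : u y <= phi_inv phi V).
      { exact (phi_inv_ge phi Hphi_cont Hphi_incr Hphi_lim (u y) V (Hu_nn y ltac:(lra)) (F2 y HyT) ltac:(lra)). }
      assert (Hey : eta (u y) <= E) by (apply Heta_mon; auto; apply Hu_nn; lra).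
      assert (Hwy : w (u y) <= Wv) by (apply Hw_mon; auto; apply Hu_nn; lra).
      assert (HHy : H y <= E * (f T y * Wv + g T y)).
      { unfold H. pose proof (Hf_nn T y HT ltac:(lra)). pose proof (Hg_nn T y HT ltac:(lra)).
        pose proof (Heta_nn (u y) (Hu_nn y ltac:(lra))). pose proof (Hw_nn (u y) (Hu_nn y ltac:(lra))).
        assert (eta (u y) * w (u y) <= E * Wv) by (apply Rmult_le_compat; auto).
        assert (f T y * (eta (u y) * w (u y)) <= f T y * (E * Wv)) by (apply Rmult_le_compat_l; auto).
        assert (g T y * eta (u y) <= g T y * E) by (apply Rmult_le_compat_l; auto).
        nra. }
      set (e1 := e * E * Wv / 3). set (e2 := e * Wv / 3). set (e3 := e / 3).
      assert (He1 : 0 < e1) by (unfold e1; apply Rdiv_lt_0_compat; [repeat apply Rmult_lt_0_compat|]; lra).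
      assert (He2 : 0 < e2) by (unfold e2; apply Rdiv_lt_0_compat; [repeat apply Rmult_lt_0_compat|]; lra).
      assert (He3 : 0 < e3) by (unfold e3; lra).
      destruct (cnH y ltac:(lra) e1 He1) as [d1 [Hd1 C1]].
      destruct (cng y ltac:(lra) e2 He2) as [d2 [Hd2 C2]].
      destruct (cnf y ltac:(lra) e3 He3) as [d3 [Hd3 C3]].
      exists (Rmin d1 (Rmin d2 d3)). split. repeat apply Rmin_glb_lt; auto.
      intros h [h0 hd] hY.
      assert (hd1 : h < d1) by (eapply Rlt_le_trans; [exact hd| apply Rmin_l]).
      assert (hd2 : h < d2) by (eapply Rlt_le_trans; [exact hd| eapply Rle_trans; [apply Rmin_r|apply Rmin_l]]).
      assert (hd3 : h < d3) by (eapply Rlt_le_trans; [exact hd| eapply Rle_trans; [apply Rmin_r|apply Rmin_r]]).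
      set (y' := y + h).
      assert (Dv : v y' - v y = Rint H y y').
      { unfold v. rewrite <- (Rint_chasles H 0 y y') by (apply cn_int; auto; unfold y'; lra). ring. }
      assert (Dvb : 0 <= Rint H y y' <= (H y + e1) * h).
      { replace h with (y' - y) by (unfold y'; ring).
        replace 0 with (0 * (y' - y)) by ring.
        apply Rint_bound. apply cn_int; auto; unfold y'; lra. unfold y'; lra.
        intros x Hx. split. apply Hnn; lra.
        assert (Rabs (x - y) < d1) by (apply Rabs_intro; unfold y' in Hx; lra).
        specialize (C1 x ltac:(lra) H0). apply Rabs_inv_lt in C1. lra. }
      assert (vle : v y <= v y') by lra.
      assert (Dz : z y' - z y <= / E * (v y' - v y)).
      { unfold z. rewrite (G_diff _ _ _ HH (v y) (v y')) by (unfold V in *; lra).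
        replace (/ E * (v y' - v y)) with (/ E * (v y' - v y)) by ring.
        apply (Rint_bound _ (v y) (v y') 0 (/ E)). apply (iota_int _ _ _ HH); unfold V in *; lra. auto.
        intros x Hx. split. left; apply (iota_pos _ _ _ HH); unfold V in *; lra.
        unfold E. apply (iota_mono _ _ _ HH); unfold V in *; lra. }
      assert (Dz2 : z y' - z y <= (f T y * Wv + g T y + e * Wv / 3) * h).
      { eapply Rle_trans. apply Dz. rewrite Dv.
        apply Rle_trans with (/ E * ((E * (f T y * Wv + g T y) + e1) * h)).
        apply Rmult_le_compat_l. left; apply Rinv_0_lt_compat; auto.
        apply Rle_trans with ((H y + e1) * h). lra. apply Rmult_le_compat_r; lra.
        right. unfold e1. field. lra. }
      assert (DG : (g T y - e2) * h <= Gi y' - Gi y).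
      { unfold Gi. rewrite <- (Rint_chasles (g T) 0 y y') by (apply cn_int; auto; unfold y'; lra).
        replace (Rint (g T) 0 y + Rint (g T) y y' - Rint (g T) 0 y) with (Rint (g T) y y') by ring.
        replace h with (y' - y) by (unfold y'; ring).
        apply (Rint_bound _ y y' _ (g T y + e2)). apply cn_int; auto; unfold y'; lra. unfold y'; lra.
        intros x Hx. assert (Rabs (x - y) < d2) by (apply Rabs_intro; unfold y' in Hx; lra).
        specialize (C2 x ltac:(lra) H0). apply Rabs_inv_lt in C2. lra. }
      assert (DF : (f T y - e3) * h <= Fi y' - Fi y).
      { unfold Fi. rewrite <- (Rint_chasles (f T) 0 y y') by (apply cn_int; auto; unfold y'; lra).
        replace (Rint (f T) 0 y + Rint (f T) y y' - Rint (f T) 0 y) with (Rint (f T) y y') by ring.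
        replace h with (y' - y) by (unfold y'; ring).
        apply (Rint_bound _ y y' _ (f T y + e3)). apply cn_int; auto; unfold y'; lra. unfold y'; lra.
        intros x Hx. assert (Rabs (x - y) < d3) by (apply Rabs_intro; unfold y' in Hx; lra).
        specialize (C3 x ltac:(lra) H0). apply Rabs_inv_lt in C3. lra. }
      assert (Dm : m y' - m y <= Wv * (f T y + 2 * e / 3) * h).
      { unfold m. unfold e2 in DG.
        assert (E1 : Wv * (f T y + 2 * e / 3) * h = (f T y * Wv + g T y + e * Wv / 3) * h - (g T y - e * Wv / 3) * h) by field.
        rewrite E1. lra. }
      assert (my0 : 0 < m y) by (pose proof (zpos y ltac:(lra)); pose proof (mz y ltac:(lra)); lra).
      assert (my1 : 0 < m y') by (pose proof (zpos y' ltac:(unfold y'; lra)); pose proof (mz y' ltac:(unfold y'; lra)); lra).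
      assert (kz : kap eta w phi x0 (m y) <= / Wv).
      { apply Rle_trans with (kap eta w phi x0 (z y)).
        apply (kap_mono _ _ _ _ WW). apply zpos; lra. apply mz; lra.
        right. unfold z. simpl. rewrite (Ginv_G _ _ _ HH (v y)) by (unfold V in *; lra). reflexivity. }
      assert (Fy : 0 <= f T y) by (apply Hf_nn; lra).
      assert (DPsi : Psi eta w phi x0 x1 (m y') - Psi eta w phi x0 x1 (m y) <= (f T y + 2 * e / 3) * h).
      { destruct (Rle_dec (m y') (m y)) as [Le|Gt].
        - pose proof (Psi_lb _ _ _ _ _ WW Hx1 (m y') (m y) my1 Le) as [L1 _].
          pose proof (kap_pos _ _ _ _ WW (m y) my0).
          assert (0 <= kap eta w phi x0 (m y) * (m y - m y')) by (apply Rmult_le_pos; lra).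
          assert (0 <= (f T y + 2 * e / 3) * h) by (apply Rmult_le_pos; lra). lra.
        - pose proof (Psi_lb _ _ _ _ _ WW Hx1 (m y) (m y') my0 ltac:(lra)) as [_ L2].
          eapply Rle_trans. apply L2.
          apply Rle_trans with (/ Wv * (m y' - m y)). apply Rmult_le_compat_r; lra.
          apply Rle_trans with (/ Wv * (Wv * (f T y + 2 * e / 3) * h)).
          apply Rmult_le_compat_l. left; apply Rinv_0_lt_compat; auto. auto.
          right. field. lra. }
      unfold D. fold y'. unfold e3 in DF. lra.
  }
  assert (mY : m Y = z Y) by (unfold m; ring).
  assert (m0 : m 0 = Gfun eta phi x0 (c T) + Rint (g T) 0 (alpha T)).
  { unfold m, z, Gi, v. rewrite !Rint_aa. rewrite Rplus_0_r. unfold K, Y. ring_simplify. reflexivity. }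
  unfold D in CMP. rewrite mY, m0 in CMP. unfold Fi in CMP. rewrite Rint_aa in CMP.
  unfold Fi, Gi, K, Y in *.
  set (X := Psi eta w phi x0 x1 (Gfun eta phi x0 (c T) + Rint (g T) 0 (alpha T)) + Rint (f T) 0 (alpha T)).
  assert (HX : Psi eta w phi x0 x1 (z (alpha T)) <= X) by (unfold X; lra).
  assert (Hq : z (alpha T) <= Psi_inv eta w phi x0 x1 X).
  { apply (Psi_inv_ge _ _ _ _ _ WW Hx1); auto. all: apply zpos; lra. }
  pose proof (zpos (alpha T) ltac:(lra)).
  set (q := Psi_inv eta w phi x0 x1 X) in *.
  destruct (Ginv_spec _ _ _ HH q ltac:(lra)) as [R1 R2].
  set (r := G_inv eta phi x0 q) in *.
  assert (vr : v (alpha T) <= r).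
  { destruct (Rle_dec (v (alpha T)) r); auto. exfalso.
    pose proof (G_sinc _ _ _ HH r (v (alpha T)) ltac:(lra) ltac:(lra)). unfold z in Hq. lra. }
  apply (phi_inv_ge phi Hphi_cont Hphi_incr Hphi_lim). apply Hu_nn; auto.
  pose proof (F1 T ltac:(lra)). lra. lra.
Qed.


Theorem theorem1
  (f g : R -> R -> R) (phi c eta w alpha u : R -> R) (x0 x1 : R)
  (Hf_cont : cont2_nonneg f) (Hf_nn : forall t s, 0 <= t -> 0 <= s -> 0 <= f t s)
  (Hg_cont : cont2_nonneg g) (Hg_nn : forall t s, 0 <= t -> 0 <= s -> 0 <= g t s)
  (Hf_mon : forall s, 0 <= s -> nondecr_nonneg (fun t => f t s))
  (Hg_mon : forall s, 0 <= s -> nondecr_nonneg (fun t => g t s))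
  (Hphi_cont : cont_nonneg phi) (Hphi_nn : forall x, 0 <= x -> 0 <= phi x)
  (Hphi_incr : strict_incr_nonneg phi)
  (Hphi_lim : forall M, exists X, 0 <= X /\ forall x, X <= x -> M < phi x)
  (Hc_cont : cont_nonneg c) (Hc_pos : forall x, 0 <= x -> 0 < c x)
  (Hc_mon : nondecr_nonneg c)
  (Heta_cont : cont_nonneg eta) (Heta_nn : forall x, 0 <= x -> 0 <= eta x)
  (Heta_mon : nondecr_nonneg eta) (Heta_pos : forall x, 0 < x -> 0 < eta x)
  (Hw_cont : cont_nonneg w) (Hw_nn : forall x, 0 <= x -> 0 <= w x)
  (Hw_mon : nondecr_nonneg w) (Hw_pos : forall x, 0 < x -> 0 < w x)
  (Hx0 : phi 0 <= x0 < c 0)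
  (HG_fin : forall x, x0 < x ->
     exists l, lower_improper_limit (fun s => / eta (phi_inv phi s)) x0 x l)
  (HG_div : forall M, exists X, x0 <= X /\ forall x, X <= x -> M < Gfun eta phi x0 x)
  (Hx1 : 0 < x1)
  (Halpha_C1 : C1_nonneg alpha) (Halpha_nn : forall t, 0 <= t -> 0 <= alpha t)
  (Halpha_mon : nondecr_nonneg alpha) (Halpha_le : forall t, 0 <= t -> alpha t <= t)
  (Hu_cont : cont_nonneg u) (Hu_nn : forall t, 0 <= t -> 0 <= u t)
  (Hu : forall t, 0 <= t ->
     phi (u t) <= c t + Rint (fun s => f t s * eta (u s) * w (u s) + g t s * eta (u s))
                              0 (alpha t)) :
  let p := fun t => Gfun eta phi x0 (c t) + Rint (g t) 0 (alpha t) in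
  exists tau, 0 < tau /\
    forall t, 0 <= t <= tau ->
      (exists x, 0 < x /\
         Psi eta w phi x0 x1 x = Psi eta w phi x0 x1 (p t) + Rint (f t) 0 (alpha t)) /\
      u t <= phi_inv phi (G_inv eta phi x0
               (Psi_inv eta w phi x0 x1
                  (Psi eta w phi x0 x1 (p t) + Rint (f t) 0 (alpha t)))).
Proof.
  cbv beta zeta.
  assert (PH : PhiH phi) by (repeat split; auto).
  assert (HH : GH eta phi x0) by (repeat split; auto; lra).
  assert (WW : WH eta w phi x0) by (split; [exact HH| repeat split; auto]).
  set (P0 := Gfun eta phi x0 (c 0)).
  assert (HP0 : 0 < P0) by (apply (G_pos _ _ _ HH); lra).
  set (Q := Psi eta w phi x0 x1 (P0 + 1) - Psi eta w phi x0 x1 (P0 + 1/2)).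
  assert (HQ : 0 < Q).
  { unfold Q. pose proof (Psi_sinc _ _ _ _ _ WW Hx1 (P0 + 1/2) (P0 + 1) ltac:(lra) ltac:(lra)). lra. }
  destruct (cn_bound (g 1) 1 (cn_slice g 1 Hg_cont ltac:(lra)) ltac:(lra)) as [Mg [HMg BMg]].
  destruct (cn_bound (f 1) 1 (cn_slice f 1 Hf_cont ltac:(lra)) ltac:(lra)) as [Mf [HMf BMf]].
  destruct (cpt_elim _ _ (G_cont _ _ _ HH (c 0) ltac:(lra)) (1/4) ltac:(lra)) as [dG [HdG CG]].
  destruct (Hc_cont 0 (Rle_refl 0) dG HdG) as [dc [Hdc Cc]].
  set (tau := Rmin (Rmin 1 (dc / 2)) (Rmin (1 / (4 * (Mg + 1))) (Q / (Mf + 1)))).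
  assert (Ht1 : tau <= 1) by (unfold tau; eapply Rle_trans; [apply Rmin_l|apply Rmin_l]).
  assert (Ht2 : tau <= dc / 2) by (unfold tau; eapply Rle_trans; [apply Rmin_l|apply Rmin_r]).
  assert (Ht3 : tau <= 1 / (4 * (Mg + 1))) by (unfold tau; eapply Rle_trans; [apply Rmin_r|apply Rmin_l]).
  assert (Ht4 : tau <= Q / (Mf + 1)) by (unfold tau; eapply Rle_trans; [apply Rmin_r|apply Rmin_r]).
  assert (Htau : 0 < tau).
  { unfold tau. repeat apply Rmin_glb_lt; try apply Rdiv_lt_0_compat; lra. }
  assert (RNG : forall t, 0 <= t <= tau -> exists x, 0 < x /\ Psi eta w phi x0 x1 x = Psi eta w phi x0 x1 (Gfun eta phi x0 (c t) + Rint (g t) 0 (alpha t))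
        + Rint (f t) 0 (alpha t)).
  { intros t Ht. pose proof (Halpha_nn t ltac:(lra)). pose proof (Halpha_le t ltac:(lra)).
    assert (Ig : 0 <= Rint (g t) 0 (alpha t) <= Mg * (alpha t - 0)).
    { replace 0 with (0 * (alpha t - 0)) at 1 by ring. apply Rint_bound; auto.
      apply cn_int; auto; try lra. apply cn_slice; auto; lra.
      intros s Hs. split. apply Hg_nn; lra.
      apply Rle_trans with (g 1 s). apply (Hg_mon s); lra.
      pose proof (BMg s ltac:(lra)). apply Rabs_le_inv in H1. lra. }
    assert (If : 0 <= Rint (f t) 0 (alpha t) <= Mf * (alpha t - 0)).
    { replace 0 with (0 * (alpha t - 0)) at 1 by ring. apply Rint_bound; auto.
      apply cn_int; auto; try lra. apply cn_slice; auto; lra.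
      intros s Hs. split. apply Hf_nn; lra.
      apply Rle_trans with (f 1 s). apply (Hf_mon s); lra.
      pose proof (BMf s ltac:(lra)). apply Rabs_le_inv in H1. lra. }
    assert (Mgt : Mg * alpha t <= 1 / 4).
    { apply Rle_trans with (Mg * (1 / (4 * (Mg + 1)))). apply Rmult_le_compat_l; lra.
      apply Rle_trans with ((Mg + 1) * (1 / (4 * (Mg + 1)))).
      apply Rmult_le_compat_r. left; apply Rdiv_lt_0_compat; lra. lra. right; field; lra. }
    assert (Mft : Mf * alpha t <= Q).
    { apply Rle_trans with (Mf * (Q / (Mf + 1))). apply Rmult_le_compat_l; lra.
      apply Rle_trans with ((Mf + 1) * (Q / (Mf + 1))).
      apply Rmult_le_compat_r. left; apply Rdiv_lt_0_compat; lra. lra. right; field; lra. }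
    assert (ct : c 0 <= c t) by (apply Hc_mon; lra).
    assert (Gct : P0 <= Gfun eta phi x0 (c t) <= P0 + 1/4).
    { split.
      - destruct ct as [ct|ct]. left; apply (G_sinc _ _ _ HH); lra. unfold P0; rewrite ct; lra.
      - assert (Rabs (c t - c 0) < dG). apply Cc. lra. rewrite Rminus_0_r, Rabs_right; lra.
        specialize (CG (c t) H1). apply Rabs_inv_lt in CG. unfold P0; lra. }
    set (pt := Gfun eta phi x0 (c t) + Rint (g t) 0 (alpha t)).
    assert (Hpt : P0 <= pt <= P0 + 1/2) by (unfold pt; lra).
    assert (Ps1 : Psi eta w phi x0 x1 pt <= Psi eta w phi x0 x1 (P0 + 1/2)).
    { destruct (Rle_dec pt (P0 + 1/2)) as [[L|L]|L].
      left; apply (Psi_sinc _ _ _ _ _ WW Hx1); lra. rewrite L; lra. lra. }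
    destruct (ivt_le (Psi eta w phi x0 x1) pt (P0 + 1)
       (Psi eta w phi x0 x1 pt + Rint (f t) 0 (alpha t))) as [x [Hx Ex]].
    lra. intros; apply Psi_cont; auto; lra. unfold Q in Ht4. 
    split. lra. unfold Q in Mft. lra.
    exists x. split; auto. lra. }
  exists tau. split; auto. intros t Ht. split. apply RNG; auto.
  apply (main_part f g phi c eta w alpha u x0 x1); auto; try lra.
Qed.
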